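(* Let $f:\mathbb{S}^3\to\mathbb{S}^3$ be a smooth map and for $g\in\mathbb{S}^3$ let $M_g:\mathrm{Im}\,\mathbb{H}\to\mathrm{Im}\,\mathbb{H}$, $M_g(x)=f_*(gx)f(g)^{-1}$. Then $M_g$ is symmetric (with respect to the Euclidean scalar product on $\mathrm{Im}\,\mathbb{H}$) for all $g\in\mathbb{S}^3$ if and only if the graph $\Gamma_{f^{-1}}=\{(g,f(g)^{-1}):g\in\mathbb{S}^3\}$ is a Lagrangian submanifold of $S^3\times S^3$ with respect to the $2$-form $\Omega$.
   Context: $S^3$ is the group of unit quaternions, with Lie algebra $\mathfrak{su}(2)\cong\mathrm{Im}\,\mathbb{H}$ and $\mathrm{T}_g S^3=g\,\mathrm{Im}\,\mathbb{H}$. Let $\langle\cdot,\cdot\rangle:=-\tfrac1{12}B$ on $\mathfrak{su}(2)$, where $B$ is the Killing form (equivalently $\langle x,y\rangle=\tfrac23\,\mathrm{Re}(x\bar y)$). The nearly Kähler structure on $S^3\times S^3$ (identified with $S^3\times S^3\times S^3/\Delta S^3$ via $(g_1,g_2,g_3)\cdot(a_1,a_2)=(g_1a_1g_3^{-1},g_2a_2g_3^{-1})$) has fundamental $2$-form given at a point $(g_1,g_2)$ on tangent vectors $(X_1,X_2),(Y_1,Y_2)$ by $\Omega((X_1,X_2),(Y_1,Y_2))=\tfrac1{\sqrt3}\big(\langle g_1^{-1}X_1,g_2^{-1}Y_2\rangle-\langle g_2^{-1}X_2,g_1^{-1}Y_1\rangle\big)$. A $3$-dimensional submanifold $L\subset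 S^3\times S^3$ is called Lagrangian if $\Omega(A,B)=0$ for all $A,B\in\mathrm{T}L$ (note $\Omega$ is not closed). *)

(* Defs.v *)
From Stdlib Require Import Reals.
Open Scope R_scope.

(* Quaternion q = q0 + q1 i + q2 j + q3 k *)
Record quat := Quat { q0 : R; q1 : R; q2 : R; q3 : R }.

Definition qmul (a b : quat) : quat :=
  Quat (q0 a * q0 b - q1 a * q1 b - q2 a * q2 b - q3 a * q3 b)
       (q0 a * q1 b + q1 a * q0 b + q2 a * q3 b - q3 a * q2 b)
       (q0 a * q2 b - q1 a * q3 b + q2 a * q0 b + q3 a * q1 b)
       (q0 a * q3 b + q1 a * q2 b - q2 a * q1 b + q3 a * q0 b).

Definition qconj (a : quat) : quat := Quat (q0 a) (- q1 a) (- q2 a) (- q3 a).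

Definition qdot (a b : quat) : R :=
  q0 a * q0 b + q1 a * q1 b + q2 a * q2 b + q3 a * q3 b.

Definition qscale (r : R) (a : quat) : quat := Quat (r * q0 a) (r * q1 a) (r * q2 a) (r * q3 a).

Definition qinv (a : quat) : quat := qscale (/ qdot a a) (qconj a).

Definition inS3 (g : quat) : Prop := qdot g g = 1.

Definition isIm (x : quat) : Prop := q0 x = 0.

(* the metric <x,y> = -1/12 B(x,y) = 2/3 Re(x conj y) *)
Definition ip (x y : quat) : R := 2 / 3 * qdot x y.

Definition qderiv (c : R -> quat) (t0 : R) (v : quat) : Prop :=
  derivable_pt_lim (fun t => q0 (c t)) t0 (q0 v) /\
  derivable_pt_lim (fun t => q1 (c t)) t0 (q1 v) /\
  derivable_pt_lim (fun t => q2 (c t)) t0 (q2 v) /\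
  derivable_pt_lim (fun t => q3 (c t)) t0 (q3 v).

Definition is_differential (f : quat -> quat) (Df : quat -> quat -> quat) : Prop :=
  forall (c : R -> quat) (v : quat),
    (forall t, inS3 (c t)) -> qderiv c 0 v ->
    qderiv (fun t => f (c t)) 0 (Df (c 0) v).

Definition Mg (f : quat -> quat) (Df : quat -> quat -> quat) (g x : quat) : quat :=
  qmul (Df g (qmul g x)) (qinv (f g)).

Definition symmetric_on_ImH (M : quat -> quat) : Prop :=
  forall x y, isIm x -> isIm y -> qdot (M x) y = qdot x (M y).

(* fundamental 2-form of the nearly Kaehler S^3 x S^3 at (g1,g2) *)
Definition Omega (g1 g2 X1 X2 Y1 Y2 : quat) : R :=
  / sqrt 3 * (ip (qmul (qinv g1) X1) (qmul (qinv g2) Y2)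
              - ip (qmul (qinv g2) X2) (qmul (qinv g1) Y1)).

Definition in_graph_inv (f : quat -> quat) (p1 p2 : quat) : Prop :=
  inS3 p1 /\ p2 = qinv (f p1).

Definition tangent_graph_inv (f : quat -> quat) (p1 p2 A1 A2 : quat) : Prop :=
  exists c1 c2 : R -> quat,
    (forall t, in_graph_inv f (c1 t) (c2 t)) /\
    c1 0 = p1 /\ c2 0 = p2 /\ qderiv c1 0 A1 /\ qderiv c2 0 A2.

Definition lagrangian_graph_inv (f : quat -> quat) : Prop :=
  forall p1 p2 A1 A2 B1 B2,
    in_graph_inv f p1 p2 ->
    tangent_graph_inv f p1 p2 A1 A2 ->
    tangent_graph_inv f p1 p2 B1 B2 ->
    Omega p1 p2 A1 A2 B1 B2 = 0.

(* Main.v *)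
Require Import Defs.
From Stdlib Require Import Reals Lra Psatz FunctionalExtensionality.
From Coquelicot Require Import Coquelicot.
Open Scope R_scope.

Lemma sq_deriv c v : qderiv c 0 v -> (forall t, qdot (c t) (c t) = 1) -> qdot (c 0) v = 0.
Proof.
intros [H0 [H1 [H2 H3]]] Hc.
pose proof (derivable_pt_lim_plus _ _ _ _ _
  (derivable_pt_lim_plus _ _ _ _ _
   (derivable_pt_lim_plus _ _ _ _ _ (derivable_pt_lim_mult _ _ _ _ _ H0 H0)
        (derivable_pt_lim_mult _ _ _ _ _ H1 H1))
    (derivable_pt_lim_mult _ _ _ _ _ H2 H2))
    (derivable_pt_lim_mult _ _ _ _ _ H3 H3)) as H.
assert (E: derivable_pt_lim (fun t => qdot (c t) (c t)) 0 0).
{ apply (derivable_pt_lim_ext (fct_cte 1)). intros; rewrite Hc; reflexivity.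
  apply derivable_pt_lim_const. }
apply (derivable_pt_lim_ext _ (fun t => qdot (c t) (c t))) in H;
  [|intros; reflexivity].
pose proof (uniqueness_limite _ _ _ _ H E) as U.
unfold qdot; nra.
Qed.

Lemma qinv_unit a : qdot a a = 1 -> qinv a = qconj a.
Proof. intro H. unfold qinv. rewrite H, Rinv_1. destruct a; unfold qscale, qconj; simpl; f_equal; ring. Qed.

Lemma qdot_conj a : qdot (qconj a) (qconj a) = qdot a a.
Proof. destruct a; unfold qdot, qconj; simpl; ring. Qed.

Lemma qconj_conj a : qconj (qconj a) = a.
Proof. destruct a; unfold qconj; simpl; f_equal; ring. Qed.

Lemma curve_ex g x : inS3 g -> isIm x -> exists c : R -> quat,
  (forall t, inS3 (c t)) /\ c 0 = g /\ qderiv c 0 (qmul g x).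
Proof.
intros Hg Hx. unfold inS3, isIm in *.
destruct g as [g0 g1 g2 g3]; destruct x as [x0 x1 x2 x3]; simpl in Hx; subst x0.
set (K := (x1*x1+x2*x2+x3*x3)/4).
assert (HK : 0 <= K) by (unfold K; nra).
set (E := fun t => Quat ((1 - K*t*t)/(1+K*t*t)) (t*x1/(1+K*t*t)) (t*x2/(1+K*t*t)) (t*x3/(1+K*t*t))).
exists (fun t => qmul (Quat g0 g1 g2 g3) (E t)).
split; [|split].
- intro t. unfold qdot in *; simpl in *.
  assert (P: 0 < 1 + K*t*t) by nra.
  replace (_ + _) with ((g0*g0+g1*g1+g2*g2+g3*g3) *
     (((1 - K*t*t)/(1+K*t*t))^2 + (t*x1/(1+K*t*t))^2 + (t*x2/(1+K*t*t))^2 + (t*x3/(1+K*t*t))^2)) by (simpl; ring).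
  rewrite Hg, Rmult_1_l. unfold K. field. unfold K in P; lra.
- unfold E, qmul; simpl; f_equal; field.
- unfold qderiv, E, qmul; simpl; repeat split; apply is_derive_Reals;
  auto_derive; try (split; [nra|auto]); try nra; field; nra.
Qed.
Lemma alg g a F W : qdot (qmul (qconj g) (qmul g a)) (qmul F (qconj W)) =
  qdot g g * (- qdot a (qmul W (qconj F)) + 2 * q0 a * qdot W F).
Proof. destruct g, a, F, W; unfold qdot, qmul, qconj; simpl; ring. Qed.

Lemma qdot_comm a b : qdot a b = qdot b a.
Proof. unfold qdot; ring. Qed.

Lemma omega_eq g a b F DA DB : qdot g g = 1 -> qdot F F = 1 -> q0 a = 0 -> q0 b = 0 ->
  qdot DA F = 0 -> qdot DB F = 0 ->
  Omega g (qinv F) (qmul g a) (qconj DA) (qmul g b) (qconj DB) =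
  / sqrt 3 * (2/3) * (qdot (qmul DA (qconj F)) b - qdot a (qmul DB (qconj F))).
Proof.
intros Hg HF Ha Hb HA HB. unfold Omega, ip.
rewrite (qinv_unit g Hg), (qinv_unit F HF), qinv_unit by (rewrite qdot_conj; auto).
rewrite qconj_conj, alg, (qdot_comm (qmul F (qconj DA))), alg, Hg, Ha, Hb, HA, HB.
rewrite (qdot_comm b). ring.
Qed.

Lemma core f Df g c v : (forall g, inS3 g -> inS3 (f g)) -> is_differential f Df ->
  (forall t, inS3 (c t)) -> c 0 = g -> qderiv c 0 v ->
  qdot (Df g v) (f g) = 0 /\ qderiv (fun t => qinv (f (c t))) 0 (qconj (Df g v)).
Proof.
intros hS3 hDf Hc H0 Hd.
pose proof (hDf c v Hc Hd) as D. rewrite H0 in D.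
split.
- rewrite qdot_comm. rewrite <- H0 at 1. apply (sq_deriv (fun t => f (c t))); auto.
  intro t; apply hS3, Hc.
- assert (E: (fun t => qinv (f (c t))) = (fun t => qconj (f (c t)))).
  { apply functional_extensionality; intro t. apply qinv_unit, hS3, Hc. }
  rewrite E. destruct D as [D0 [D1 [D2 D3]]].
  unfold qderiv; simpl; repeat split; auto;
  apply (derivable_pt_lim_opp (fun t => _ (f (c t)))); assumption.
Qed.

Lemma qderiv_unique c v w : qderiv c 0 v -> qderiv c 0 w -> v = w.
Proof.
intros [A0 [A1 [A2 A3]]] [B0 [B1 [B2 B3]]].
destruct v, w; simpl in *; f_equal; eapply uniqueness_limite; eauto.
Qed.

Lemma decomp g A : qdot g g = 1 -> qmul g (qmul (qconj g) A) = A.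
Proof.
intro H. destruct g as [a b c d], A as [x y z w]; unfold qdot, qmul, qconj in *; simpl in *.
f_equal; [transitivity ((a*a+b*b+c*c+d*d)*x)|transitivity ((a*a+b*b+c*c+d*d)*y)
 |transitivity ((a*a+b*b+c*c+d*d)*z)|transitivity ((a*a+b*b+c*c+d*d)*w)];
 try ring; rewrite H; ring.
Qed.

Lemma q0_conjmul g A : q0 (qmul (qconj g) A) = qdot g A.
Proof. destruct g, A; unfold qdot, qmul, qconj; simpl; ring. Qed.

Lemma sqrt3_pos : / sqrt 3 * (2/3) <> 0.
Proof.
assert (0 < sqrt 3) by (apply sqrt_lt_R0; lra).
apply Rmult_integral_contrapositive; split; [apply Rinv_neq_0_compat|]; lra.
Qed.

Theorem lemma4p1 (f : quat -> quat) (Df : quat -> quat -> quat)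
  (hS3 : forall g, inS3 g -> inS3 (f g))
  (hDf : is_differential f Df) :
  (forall g, inS3 g -> symmetric_on_ImH (Mg f Df g)) <-> lagrangian_graph_inv f.
Proof.
split.
- intros Hsym p1 p2 A1 A2 B1 B2 [Hp1 Hp2]
    [c1 [c2 [Hc [E1 [E2 [DA1 DA2]]]]]] [d1 [d2 [Hd [F1 [F2 [DB1 DB2]]]]]].
  assert (Hc1 : forall t, inS3 (c1 t)) by (intro t; apply (Hc t)).
  assert (Hd1 : forall t, inS3 (d1 t)) by (intro t; apply (Hd t)).
  assert (Ec2 : c2 = fun t => qinv (f (c1 t))) by
    (apply functional_extensionality; intro t; apply (Hc t)).
  assert (Ed2 : d2 = fun t => qinv (f (d1 t))) by
    (apply functional_extensionality; intro t; apply (Hd t)).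
  destruct (core f Df p1 c1 A1 hS3 hDf Hc1 E1 DA1) as [OA DA].
  destruct (core f Df p1 d1 B1 hS3 hDf Hd1 F1 DB1) as [OB DB].
  subst c2 d2.
  rewrite (qderiv_unique _ _ _ DA2 DA), (qderiv_unique _ _ _ DB2 DB).
  assert (ZA : qdot p1 A1 = 0) by (rewrite <- E1; apply sq_deriv; auto).
  assert (ZB : qdot p1 B1 = 0) by (rewrite <- F1; apply sq_deriv; auto).
  rewrite <- (decomp p1 A1 Hp1), <- (decomp p1 B1 Hp1).
  rewrite Hp2. unfold inS3 in Hp1.
  rewrite omega_eq; auto; try (rewrite q0_conjmul; auto); try (rewrite decomp; auto).
  assert (IA : isIm (qmul (qconj p1) A1)) by (unfold isIm; rewrite q0_conjmul; auto).
  assert (IB : isIm (qmul (qconj p1) B1)) by (unfold isIm; rewrite q0_conjmul; auto).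
  pose proof (Hsym p1 Hp1 (qmul (qconj p1) A1) (qmul (qconj p1) B1) IA IB) as S.
  unfold Mg in S. rewrite !decomp in S by auto.
  rewrite qinv_unit in S by (apply hS3; auto).
  rewrite !decomp by auto. rewrite S. ring.
  apply hS3; auto.
- intros HL g Hg x y Hx Hy.
  destruct (curve_ex g x Hg Hx) as [c [Hc [E D]]].
  destruct (curve_ex g y Hg Hy) as [d [Hd [F DD]]].
  destruct (core f Df g c _ hS3 hDf Hc E D) as [OA DA].
  destruct (core f Df g d _ hS3 hDf Hd F DD) as [OB DB].
  assert (HG : in_graph_inv f g (qinv (f g))) by (split; auto).
  assert (TA : tangent_graph_inv f g (qinv (f g)) (qmul g x) (qconj (Df g (qmul g x)))).
  { exists c, (fun t => qinv (f (c t))). split; [intro t; split; [apply Hc|reflexivity]|]. split; [exact E|]. split; [rewrite E; reflexivity|]. split; [exact D|exact DA]. }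
  assert (TB : tangent_graph_inv f g (qinv (f g)) (qmul g y) (qconj (Df g (qmul g y)))).
  { exists d, (fun t => qinv (f (d t))). split; [intro t; split; [apply Hd|reflexivity]|]. split; [exact F|]. split; [rewrite F; reflexivity|]. split; [exact DD|exact DB]. }
  pose proof (HL _ _ _ _ _ _ HG TA TB) as O.
  rewrite omega_eq in O; auto; try apply hS3; auto.
  unfold Mg. rewrite qinv_unit by (apply hS3; auto).
  apply Rmult_integral in O. destruct O as [O|O]; [exfalso; apply sqrt3_pos; auto| lra].
Qed.
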